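(* Assume that for every integer $d\ge5$ and every real $x\ge\frac12\left(d+\sqrt{d+2}\right)$ one has $-\frac{R_d(x)}{P_d(x)}\ge\frac{0.995(d-2)}{2x+d-2}$. Let $s_1\ge1$ and $s_2$ be integers with $s_2>\frac12\left(\sqrt{8s_1+9}-1\right)$, and let $$d_0=\left\lfloor\sqrt{4s_1^2+4s_1+(s_2+\tfrac12)^2}-s_2-\tfrac32\right\rfloor,$$ and suppose $d_0\ge5$. If $$0<\frac{2}{d_0+1}(s_1^2+s_1)-\frac{d_0+2}{2}-s_2\le\frac{0.995(d_0-2)}{2s_1+d_0-2},$$ then the function $f_{s_1,s_2}(N)=\binom{s_2}{N}\sum_i\binom{s_1}{i}\binom{s_1}{N-i}\binom{N}{i}$ attains its maximum over integers $N$ at $N=\left\lfloor 2s_1+s_2+\tfrac32-\sqrt{4s_1^2+4s_1+(s_2+\tfrac12)^2}\right\rfloor+1$.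
   Context: Binomial coefficients $\binom{a}{b}$ are $0$ when $b<0$ or $b>a$. For a nonnegative integer $d$, $P_d(x)=\sum_{i=0}^{d}\frac{(x_i)^2(x_{d-i})^2}{i!\,(d-i)!}$ with $x_i=x(x-1)\cdots(x-i+1)$, and $R_d(x)=P_{d+1}(x)-\left(\frac{2}{d+1}x^2-\frac{2d}{d+1}x+\frac d2\right)P_d(x)$. The first sentence of the claim (the assumed inequality) is the paper's Conjecture 3.1, taken here as a hypothesis. *)

(* Defs.v *)
From HB Require Import structures.
From mathcomp Require Import all_boot all_order all_algebra.
From mathcomp Require Import reals.
Set Implicit Arguments. Unset Strict Implicit. Unset Printing Implicit Defensive.
Import Order.TTheory GRing.Theory Num.Theory.
Local Open Scope ring_scope.

Definition falling {R : ringType} (x : R) (i : nat) : R :=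
  \prod_(k < i) (x - k%:R).

Definition Pd {R : fieldType} (d : nat) (x : R) : R :=
  \sum_(i < d.+1) (falling x i) ^+ 2 * (falling x (d - i)) ^+ 2
                    / ((i`!)%:R * ((d - i)`!)%:R).

Definition Rd {R : fieldType} (d : nat) (x : R) : R :=
  Pd d.+1 x - (2 / (d.+1)%:R * x ^+ 2 - 2 * d%:R / (d.+1)%:R * x + d%:R / 2) * Pd d x.

Definition conjecture3p1 (R : realType) : Prop :=
  forall (d : nat) (x : R), (5 <= d)%N ->
    (d%:R + Num.sqrt (d%:R + 2)) / 2 <= x ->
    (995 / 1000) * (d%:R - 2) / (2 * x + d%:R - 2) <= - (Rd d x / Pd d x).

(* f_{s1,s2}(N) = C(s2,N) * sum_i C(s1,i) C(s1,N-i) C(N,i), for integer N;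
   all binomials vanish when N < 0, and the summand vanishes unless 0 <= i <= N. *)
Definition fs (s1 s2 : nat) (N : int) : nat :=
  match N with
  | Posz n => 'C(s2, n) * \sum_(i < n.+1) 'C(s1, i) * 'C(s1, n - i) * 'C(n, i)
  | Negz _ => 0
  end.

(* Main.v *)
Require Import Defs.
From HB Require Import structures.
From mathcomp Require Import all_boot all_order all_algebra.
From mathcomp Require Import reals.
From mathcomp Require Import ring lra zify.
Set Implicit Arguments. Unset Strict Implicit. Unset Printing Implicit Defensive.
Import Order.TTheory GRing.Theory Num.Theory.
Local Open Scope ring_scope.


Section Seq.
Variable R : realFieldType.
Variable s : nat.

Definition aa (k : int) : R :=
  match k with Posz i => ('C(s, i))%:R / (i`!)%:R | Negz _ => 0 end.

Lemma aa_ge0 k : 0 <= aa k.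
Proof. case: k => [i|j] //=; by rewrite divr_ge0 ?ler0n. Qed.

Lemma aa_gt0 (i : nat) : (i <= s)%N -> 0 < aa i.
Proof. by move=> hi /=; rewrite divr_gt0 // ltr0n ?bin_gt0 ?fact_gt0. Qed.

Lemma aa_neg (k : int) : k < 0 -> aa k = 0.
Proof. by case: k. Qed.

Lemma aa_big (i : nat) : (s < i)%N -> aa i = 0.
Proof. by move=> hi /=; rewrite bin_small // mul0r. Qed.

Lemma aa_rel (k : int) : (k + 1)%:~R ^+ 2 * aa (k + 1) = (s%:R - k%:~R) * aa k.
Proof.
case: k => [i|j].
  have -> : (Posz i + 1 = Posz i.+1)%R by rewrite -addn1.
  rewrite /= -!pmulrn.
  have h := mul_bin_left s i.
  rewrite factS natrM.
  have hi0 : (i`!)%:R != 0 :> R by rewrite pnatr_eq0 -lt0n fact_gt0.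
  have hi1 : (i.+1)%:R != 0 :> R by rewrite pnatr_eq0.
  case: (leqP i s) => his.
    move/(congr1 (fun n => n%:R : R)): h; rewrite !natrM natrB // => h.
    rewrite [RHS]mulrA -h; field; by rewrite hi0 addrC natr1.
  have h1 : (s < i.+1)%N by lia.
  by rewrite (bin_small his) (bin_small h1) !mul0r !mulr0.
case: j => [|j] /=.
  have -> : (Negz 0 + 1 = 0)%R by [].
  by rewrite /= !mulr0 expr0n /= mul0r.
by rewrite !mulr0.
Qed.


Lemma aa_zero (k : int) : (k < 0)%R \/ (s%:Z < k)%R -> aa k = 0.
Proof.
case: k => [i|j] //= [] //= h.
by rewrite bin_small ?mul0r //; lia.
Qed.

Lemma aa_pos (k : int) : (0 <= k)%R -> (k <= s%:Z)%R -> 0 < aa k.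
Proof. by case: k => [i|j] //= _ h; apply: aa_gt0; lia. Qed.

Lemma aa_tp2 (p q : int) : (p <= q)%R -> aa p * aa (q + 1) <= aa (p + 1) * aa q.
Proof.
move=> hpq.
have hP := aa_ge0 (p + 1); have hQ := aa_ge0 q.
case: (ltrP p 0) => hp.
  by rewrite aa_neg // mul0r mulr_ge0.
case: (lerP s%:Z q) => hq.
  by rewrite (@aa_zero (q + 1)) ?mulr0 ?mulr_ge0 //; right; lia.
have rp := aa_rel p; have rq := aa_rel q.
have hX := aa_ge0 p; have hQ1 := aa_ge0 (q + 1).
set X := aa p in rp hX *; set Y := aa q in rq hQ *.
set P1 := aa (p + 1) in rp hP *; set Q1 := aa (q + 1) in rq hQ1 *.
have e1 : (p + 1)%:~R = p%:~R + 1 :> R by rewrite intrD.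
have e2 : (q + 1)%:~R = q%:~R + 1 :> R by rewrite intrD.
rewrite e1 in rp; rewrite e2 in rq.
have h0 : 0 <= p%:~R :> R by rewrite -(ler_int R) in hp.
have h1 : p%:~R <= q%:~R :> R by rewrite ler_int.
have h2 : q%:~R + 1 <= s%:R :> R.
  have : (q + 1 <= s%:Z)%R by lia.
  by rewrite -(ler_int R) intrD.
set x := p%:~R in h0 h1 rp *; set y := q%:~R in h1 h2 rq *.
set S := s%:R in h2 rp rq *.
have hxy : 0 <= X * Y by rewrite mulr_ge0.
have key : (x + 1) ^+ 2 * (y + 1) ^+ 2 * (P1 * Y - X * Q1)
   = X * Y * ((y + 1) ^+ 2 * (S - x) - (x + 1) ^+ 2 * (S - y)).
  have -> : (x + 1) ^+ 2 * (y + 1) ^+ 2 * (P1 * Y - X * Q1)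
     = (y + 1) ^+ 2 * Y * ((x + 1) ^+ 2 * P1) - (x + 1) ^+ 2 * X * ((y + 1) ^+ 2 * Q1) by ring.
  rewrite rp rq; ring.
have hD : 0 <= (y + 1) ^+ 2 * (S - x) - (x + 1) ^+ 2 * (S - y).
  have -> : (y + 1) ^+ 2 * (S - x) - (x + 1) ^+ 2 * (S - y)
    = ((y - x) * (y + x + 2)) * (S - x) + (x + 1) ^+ 2 * (y - x) by ring.
  apply: addr_ge0; apply: mulr_ge0; try apply: mulr_ge0; try lra.
have hpos : 0 < (x + 1) ^+ 2 * (y + 1) ^+ 2 by apply: mulr_gt0; apply: exprn_gt0; lra.
rewrite -subr_ge0.
have : 0 <= (x + 1) ^+ 2 * (y + 1) ^+ 2 * (P1 * Y - X * Q1) by rewrite key mulr_ge0.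
by rewrite pmulr_rge0.
Qed.

Definition cc (N : nat) : R := \sum_(i < N.+1) aa i%:Z * aa (N%:Z - i%:Z).

Lemma cc_widen N L : (N < L)%N -> cc N = \sum_(i < L) aa i%:Z * aa (N%:Z - i%:Z).
Proof.
move=> hNL; rewrite /cc (big_ord_widen L (fun i : nat => aa i%:Z * aa (N%:Z - i%:Z))) //.
rewrite big_mkcond; apply: eq_bigr => i _; case: ifP => // /negbT.
rewrite -leqNgt => h; rewrite (@aa_zero (N%:Z - i%:Z)) ?mulr0 //; left; lia.
Qed.

Lemma cc_ge0 N : 0 <= cc N.
Proof. by apply: sumr_ge0 => i _; rewrite mulr_ge0 ?aa_ge0. Qed.

Lemma cc_zero N : (2 * s < N)%N -> cc N = 0.
Proof.
move=> h; apply: big1 => i _.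
case: (leqP i s) => hi.
  by rewrite (@aa_zero (N%:Z - i%:Z)) ?mulr0 //; right; lia.
by rewrite aa_big // mul0r.
Qed.

Lemma cc_gt0 N : (N <= 2 * s)%N -> 0 < cc N.
Proof.
move=> h; rewrite /cc.
have hi0 : ((N - s)%N < N.+1)%N by lia.
rewrite (bigD1 (Ordinal hi0)) //.
apply: (@lt_le_trans _ _ (aa (N - s)%N%:Z * aa (N%:Z - (N - s)%N%:Z))).
  apply: mulr_gt0; first by apply: aa_gt0; lia.
  by apply: aa_pos; lia.
rewrite lerDl; apply: sumr_ge0 => i _; by rewrite mulr_ge0 ?aa_ge0.
Qed.

Lemma binet (L : nat) (x y u w : nat -> R) :
  2 * ((\sum_(k < L) x k * y k) * (\sum_(l < L) u l * w l)
       - (\sum_(k < L) x k * w k) * (\sum_(l < L) u l * y l))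
  = \sum_(k < L) \sum_(l < L) (x k * u l - x l * u k) * (y k * w l - y l * w k).
Proof.
have E : forall k l : 'I_L, (x k * u l - x l * u k) * (y k * w l - y l * w k)
   = ((x k * y k) * (u l * w l) - (x k * w k) * (u l * y l))
     + ((x l * y l) * (u k * w k) - (x l * w l) * (u k * y k)) by move=> k l; ring.
rewrite [RHS](eq_bigr (fun k : 'I_L => \sum_(l < L) ((x k * y k) * (u l * w l) - (x k * w k) * (u l * y l))
   + \sum_(l < L) ((x l * y l) * (u k * w k) - (x l * w l) * (u k * y k)))); last first.
  by move=> k _; rewrite -big_split /=; apply: eq_bigr => l _; exact: E.
rewrite big_split /=.
rewrite [X in _ = _ + X]exchange_big /=.
have F : \sum_(k < L) \sum_(l < L) ((x k * y k) * (u l * w l) - (x k * w k) * (u l * y l))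
   = (\sum_(k < L) x k * y k) * (\sum_(l < L) u l * w l)
       - (\sum_(k < L) x k * w k) * (\sum_(l < L) u l * y l).
  rewrite !mulr_suml -sumrB; apply: eq_bigr => k _.
  by rewrite !mulr_sumr -sumrB.
rewrite F; ring.
Qed.

Lemma term_ge0 (n m1 m2 : int) :
  0 <= (aa (n - m1) * aa (n + 1 - m2) - aa (n - m2) * aa (n + 1 - m1))
       * (aa m1 * aa (m2 - 1) - aa m2 * aa (m1 - 1)).
Proof.
wlog h : m1 m2 / (m1 <= m2)%R.
  move=> W; case: (lerP m1 m2) => h; first exact: W.
  have := W m2 m1 (ltW h).
  set A := aa (n - m1) * aa (n + 1 - m2) - aa (n - m2) * aa (n + 1 - m1).
  set B := aa m1 * aa (m2 - 1) - aa m2 * aa (m1 - 1).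
  have -> : aa (n - m2) * aa (n + 1 - m1) - aa (n - m1) * aa (n + 1 - m2) = - A by rewrite /A; ring.
  have -> : aa m2 * aa (m1 - 1) - aa m1 * aa (m2 - 1) = - B by rewrite /B; ring.
  by rewrite mulrNN.
apply: mulr_ge0; rewrite subr_ge0.
  have := @aa_tp2 (n - m2) (n - m1) ltac:(lia).
  have -> : (n - m1 + 1 = n + 1 - m1)%R by ring.
  have -> : (n - m2 + 1 = n + 1 - m2)%R by ring.
  by rewrite mulrC [X in _ <= X]mulrC.
have := @aa_tp2 (m1 - 1) (m2 - 1) ltac:(lia).
rewrite !subrK => H.
by rewrite mulrC.
Qed.

Lemma cc_logconc k : cc k * cc k.+2 <= cc k.+1 ^+ 2.
Proof.
set n := k.+1.
pose x := fun m : nat => aa (n%:Z - m%:Z).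
pose y := fun m : nat => aa m%:Z.
pose u := fun m : nat => aa (n%:Z + 1 - m%:Z).
pose w := fun m : nat => aa (m%:Z - 1).
have B := binet (n.+2) x y u w.
have Sxy : \sum_(m < n.+2) x m * y m = cc n.
  rewrite (@cc_widen n n.+2) //; apply: eq_bigr => i _; by rewrite mulrC.
have Suw : \sum_(m < n.+2) u m * w m = cc n.
  rewrite big_ord_recl /u /w.
  rewrite (@aa_neg (0%:Z - 1)) // mulr0 add0r.
  rewrite /cc; apply: eq_bigr => i _.
  rewrite lift0 mulrC; congr (_ * _); congr aa; lia.
have Sxw : \sum_(m < n.+2) x m * w m = cc k.
  rewrite big_ord_recl /x /w.
  rewrite (@aa_neg (0%:Z - 1)) // mulr0 add0r.
  rewrite (@cc_widen k n.+1) //; apply: eq_bigr => i _.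
  rewrite lift0 mulrC; congr (_ * _); congr aa; rewrite /n; lia.
have Suy : \sum_(m < n.+2) u m * y m = cc n.+1.
  rewrite /cc; apply: eq_bigr => i _.
  rewrite /u /y mulrC; congr (_ * _); congr aa; rewrite /n; lia.
rewrite Sxy Suw Sxw Suy in B.
have H : 0 <= 2 * (cc n * cc n - cc k * cc n.+1).
  rewrite B; apply: sumr_ge0 => i _; apply: sumr_ge0 => j _.
  exact: term_ge0.
rewrite expr2; lra.
Qed.


Lemma intr_sub (a b : nat) : ((a%:Z - b%:Z)%:~R : R) = a%:R - b%:R.
Proof. by rewrite intrB. Qed.

Lemma rec_pt (m j S y0 y1 x0 x1 x2 : R) :
  (j + 1) ^+ 2 * y1 = (S - j) * y0 ->
  (m - j + 1) ^+ 2 * x1 = (S - (m - j)) * x0 ->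
  (m - j + 2) ^+ 2 * x2 = (S - (m - j + 1)) * x1 ->
  (m + 2) ^+ 3 * (y0 * x2)
  - ((2 * S * (2 * m + 3) - (m + 1) * (3 * m + 4)) * (y0 * x1) + 2 * (2 * S - m) * (y0 * x0))
  = (-2 * (j + 1) ^+ 2 * y1 * x0 + (j + 1) ^+ 2 * (2 * (j + 1) - 3 * m - 6) * y1 * x1)
    - (-2 * j ^+ 2 * y0 * x1 + j ^+ 2 * (2 * j - 3 * m - 6) * y0 * x2).
Proof.
move=> r1 r2 r3.
have E : forall Z1 Z2 Z3 : R,
  (m + 2) ^+ 3 * (y0 * x2)
  - ((2 * S * (2 * m + 3) - (m + 1) * (3 * m + 4)) * (y0 * x1) + 2 * (2 * S - m) * (y0 * x0))
  - ((-2 * (j + 1) ^+ 2 * y1 * x0 + (j + 1) ^+ 2 * (2 * (j + 1) - 3 * m - 6) * y1 * x1)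
    - (-2 * j ^+ 2 * y0 * x1 + j ^+ 2 * (2 * j - 3 * m - 6) * y0 * x2))
  = 2 * x0 * ((j + 1) ^+ 2 * y1 - (S - j) * y0)
    - (2 * j - 3 * m - 4) * x1 * ((j + 1) ^+ 2 * y1 - (S - j) * y0)
    + 2 * y0 * ((m - j + 1) ^+ 2 * x1 - (S - (m - j)) * x0)
    + (2 * j + m + 2) * y0 * ((m - j + 2) ^+ 2 * x2 - (S - (m - j + 1)) * x1).
  by move=> *; ring.
apply/eqP; rewrite -subr_eq0; apply/eqP.
by rewrite (E 0 0 0) r1 r2 r3 !subrr !mulr0 subr0 !addr0.
Qed.

Lemma cc_rec M :
  (M%:R + 2) ^+ 3 * cc M.+2
  = (2 * s%:R * (2 * M%:R + 3) - (M%:R + 1) * (3 * M%:R + 4)) * cc M.+1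
    + 2 * (2 * s%:R - M%:R) * cc M.
Proof.
rewrite (@cc_widen M.+2 M.+3) // (@cc_widen M.+1 M.+3) // (@cc_widen M M.+3) //.
pose G := fun i : nat => -2 * i%:R ^+ 2 * aa i%:Z * aa (M.+1%:Z - i%:Z)
   + i%:R ^+ 2 * (2 * i%:R - 3 * M%:R - 6) * aa i%:Z * aa (M.+2%:Z - i%:Z) : R.
have T : \sum_(i < M.+3) (G i.+1 - G i) = 0.
  rewrite -(big_mkord xpredT (fun i => G i.+1 - G i)) telescope_sumr //.
  rewrite /G; cbv beta.
  rewrite (@aa_neg (M.+1%:Z - M.+3%:Z)); last by lia.
  rewrite (@aa_neg (M.+2%:Z - M.+3%:Z)); last by lia.
  rewrite mulr0n; ring.
rewrite !mulr_sumr -big_split; apply/eqP; rewrite -subr_eq0 -sumrB; apply/eqP.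
rewrite -[RHS]T; apply: eq_bigr => i _.
have e1 : (i%:Z + 1 = i.+1%:Z)%R by lia.
have e2 : (M%:Z - i%:Z + 1 = M.+1%:Z - i%:Z)%R by lia.
have e3 : (M.+1%:Z - i%:Z + 1 = M.+2%:Z - i%:Z)%R by lia.
have e4 : (M.+1%:Z - i.+1%:Z = M%:Z - i%:Z)%R by lia.
have e5 : (M.+2%:Z - i.+1%:Z = M.+1%:Z - i%:Z)%R by lia.
have r1 : (i%:R + 1) ^+ 2 * aa i.+1%:Z = (s%:R - i%:R) * aa i%:Z.
  by move: (aa_rel i%:Z); rewrite intrD e1.
have r2 : (M%:R - i%:R + 1) ^+ 2 * aa (M.+1%:Z - i%:Z) = (s%:R - (M%:R - i%:R)) * aa (M%:Z - i%:Z).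
  by move: (aa_rel (M%:Z - i%:Z)); rewrite intrD e2 intr_sub.
have r3 : (M%:R - i%:R + 2) ^+ 2 * aa (M.+2%:Z - i%:Z)
          = (s%:R - (M%:R - i%:R + 1)) * aa (M.+1%:Z - i%:Z).
  move: (aa_rel (M.+1%:Z - i%:Z)); rewrite intrD e3 intr_sub -!natr1.
  by congr (_ * _ = (_ - _) * _); ring.
have := rec_pt r1 r2 r3.
rewrite /G; cbv beta; rewrite e4 e5 -[i.+1%:R]natr1 => H; exact: H.
lia.
Qed.

Lemma cc_nat N : cc N = \sum_(i < N.+1) aa i%:Z * aa (N - i)%N%:Z.
Proof.
apply: eq_bigr => i _; congr (_ * _); congr aa.
by rewrite subzn // -ltnS.
Qed.

Lemma fs_eq (t N : nat) : ((fs s t (Posz N))%:R : R) = (t ^_ N)%:R * cc N.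
Proof.
rewrite /fs cc_nat natrM -bin_ffact natrM -mulrA; congr (_ * _).
rewrite natr_sum mulr_sumr; apply: eq_bigr => i _.
have hi : (i <= N)%N by rewrite -ltnS.
have hf := bin_fact hi.
move/(congr1 (fun n => n%:R : R)): hf; rewrite !natrM => hf.
have h1 : (i`!)%:R != 0 :> R by rewrite pnatr_eq0 -lt0n fact_gt0.
have h2 : ((N - i)`!)%:R != 0 :> R by rewrite pnatr_eq0 -lt0n fact_gt0.
rewrite -hf /aa /=; field. by rewrite h1 h2.
Qed.

Lemma conv2 (K N : nat) (phi : nat -> nat -> R) :
  (forall i j, (K < i)%N -> phi i j = 0) -> (forall i j, (K < j)%N -> phi i j = 0) ->
  \sum_(i < N.+1) phi i (N - i)%N
  = \sum_(i < K.+1) \sum_(j < K.+1) (if (i + j == N)%N then phi i j else 0).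
Proof.
move=> h1 h2.
have inner : forall i : nat, \sum_(j < K.+1) (if (i + j == N)%N then phi i j else 0)
   = if (i <= N)%N then phi i (N - i)%N else 0.
  move=> i; rewrite -big_mkcond.
  case: (leqP i N) => hiN.
    rewrite (eq_bigl (fun j : 'I_K.+1 => (j == (N - i)%N :> nat))); last first.
      by move=> j /=; apply/eqP/eqP; lia.
    rewrite big_ord1_eq; case: ltnP => // hK.
    by rewrite h2 //; lia.
  rewrite big_pred0 // => j; apply/negbTE/eqP; lia.
rewrite [RHS](eq_bigr (fun i : 'I_K.+1 => if (i <= N)%N then phi i (N - i)%N else 0)); last by move=> i _; exact: inner.
rewrite (big_ord_widen (N + K).+1 (fun i => phi i (N - i)%N)); last by lia.
rewrite (big_ord_widen (N + K).+1 (fun i => if (i <= N)%N then phi i (N - i)%N else 0)); last by lia.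
rewrite big_mkcond [RHS]big_mkcond /=. apply: eq_bigr => i _.
case: (ltnP i N.+1) => hi; case: (ltnP i K.+1) => hk //=.
- by rewrite ltnS in hi; rewrite hi.
- by rewrite h1.
- by rewrite leqNgt hi.
Qed.

Lemma falling_nat (n i : nat) : falling (n%:R : R) i = (n ^_ i)%:R.
Proof.
elim: i => [|i IH]; first by rewrite /falling big_ord0 ffactn0.
rewrite /falling big_ord_recr /= -/(falling _ _) IH ffactnSr natrM.
case: (leqP i n) => h; first by rewrite natrB.
by rewrite ffact_small // !mul0r.
Qed.

Lemma Pd_eq (d : nat) : (d <= 2 * s)%N -> Pd d (s%:R : R) = (s`!)%:R ^+ 2 * cc (2 * s - d)%N.
Proof.
move=> hd.
pose al := fun i : nat => (s ^_ i)%:R ^+ 2 / (i`!)%:R : R.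
have Hal : forall i, (s < i)%N -> al i = 0 by move=> i hi; rewrite /al ffact_small // expr2 !mul0r.
have E1 : Pd d (s%:R : R) = \sum_(i < d.+1) al i * al (d - i)%N.
  rewrite /Pd; apply: eq_bigr => i _; rewrite !falling_nat /al.
  by rewrite mulf_div.
have C1 := @conv2 s d (fun i j => al i * al j)
  (fun i j h => ltac:(by rewrite /= Hal ?mul0r)) (fun i j h => ltac:(by rewrite /= (Hal j) ?mulr0)).
have C2 := @conv2 s (2 * s - d) (fun i j => aa i%:Z * aa j%:Z)
  (fun i j h => ltac:(by cbv beta; rewrite aa_big ?mul0r)) (fun i j h => ltac:(by cbv beta; rewrite (aa_big h) ?mulr0)).
rewrite E1 C1 cc_nat C2.
rewrite (reindex_inj rev_ord_inj) /= mulr_sumr; apply: eq_bigr => i _.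
rewrite (reindex_inj rev_ord_inj) /= mulr_sumr; apply: eq_bigr => j _.
have hi := ltn_ord i; have hj := ltn_ord j.
have -> : ((s.+1 - i.+1 + (s.+1 - j.+1) == d) = (i + j == 2 * s - d))%N.
  by apply/eqP/eqP; lia.
case: eqP => _; last by rewrite mulr0.
have A : forall k : nat, (k < s.+1)%N -> al (s.+1 - k.+1)%N = (s`!)%:R * aa k%:Z.
  move=> k hk; rewrite /al /= subSS.
  have hf := ffact_fact (leq_subr k s).
  rewrite subKn in hf; last by rewrite -ltnS.
  have hb := bin_fact (m := k) (n := s) ltac:(lia).
  move/(congr1 (fun n => n%:R : R)): hf; rewrite natrM => hf.
  move/(congr1 (fun n => n%:R : R)): hb; rewrite !natrM => hb.
  have h1 : (k`!)%:R != 0 :> R by rewrite pnatr_eq0 -lt0n fact_gt0.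
  have h2 : ((s - k)`!)%:R != 0 :> R by rewrite pnatr_eq0 -lt0n fact_gt0.
  have -> : (s ^_ (s - k))%:R = (s`!)%:R / (k`!)%:R :> R.
    by rewrite -hf mulfK.
  rewrite -hb; field; by rewrite h1 h2.
rewrite A // A // /aa /=; ring.
Qed.
End Seq.


Lemma E4_ineq (R : realFieldType) (n d v t : R) : 1 <= n -> 0 <= d -> 0 <= v -> v <= 1 ->
  t = ((n + d) ^+ 2 + 2 * (n + d)) / (2 * (d + 1)) - (d + 2) / 2 - v ->
  (t - n) * ((n + d) * (2 * n + 1) - n * (3 * n + 1) + 2 * (d + 1) * (t - n + 1)) <= (n + 1) ^+ 3.
Proof.
move=> hn hd hv0 hv1 ht.
have hD : d + 1 != 0 by rewrite lt0r_neq0 // ltr_wpDl.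
pose E4 := 4*n^+3*d+4*n^+3+4*n^+2*d^+2*v+8*n^+2*d^+2+8*n^+2*d*v+20*n^+2*d+4*n^+2*v+12*n^+2
  +8*n*d^+3*v+4*n*d^+3+16*n*d^+2*v+8*n*d*v
  + (12*(n-1)+24*(n-1)*d^+2+32*(n-1)*d+4*d^+3*(1-v)*(1+2*v)+24*d^+2*(1-v)*(1+v)+16*d^+2
     +12*d*((1-v)*(4+3*v)+v^+2)+8*(1-v)*(2+v)).
have key : (n + 1) ^+ 3 - (t - n) * ((n + d) * (2 * n + 1) - n * (3 * n + 1) + 2 * (d + 1) * (t - n + 1))
   = E4 / (4 * (d + 1) ^+ 2).
  rewrite ht /E4; field; exact: hD.
have hE : 0 <= E4.
  have h1 : 0 <= n - 1 by lra.
  have h2 : 0 <= 1 - v by lra.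
  rewrite /E4; repeat apply: addr_ge0; repeat apply: mulr_ge0; rewrite ?exprn_ge0 //; try lra.
  by apply: addr_ge0; [apply: mulr_ge0; lra | rewrite exprn_ge0].
rewrite -subr_ge0 key; apply: divr_ge0 => //.
by rewrite mulr_ge0 // exprn_ge0 // ltW // ltr_wpDl.
Qed.


Lemma unimodal (R : realFieldType) (s t n : nat) : (1 <= n)%N -> (n <= t)%N -> (n <= 2 * s)%N ->
  cc R s n.-1 <= (t%:R - n%:R + 1) * cc R s n ->
  (t%:R - n%:R) * cc R s n.+1 <= cc R s n ->
  forall m, (t ^_ m)%:R * cc R s m <= (t ^_ n)%:R * cc R s n.
Proof.
move=> hn1 hnt hns Hlo Hhi.
have cpos : forall k, (k <= 2 * s)%N -> 0 < cc R s k by move=> k hk; exact: cc_gt0.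
have Dec : forall j, (t%:R - (n + j)%:R) * cc R s (n + j).+1 <= cc R s (n + j).
  elim=> [|j IH]; first by rewrite addn0.
  set k := (n + j)%N in IH *.
  rewrite addnS -/k.
  case: (leqP t k.+1) => htk.
    have : (t%:R - k.+1%:R : R) <= 0 by rewrite subr_le0 ler_nat.
    move=> h; apply: (le_trans (y := 0)); last exact: cc_ge0.
    by rewrite mulr_le0_ge0 // cc_ge0.
  have hck := cc_ge0 R s k; have hck1 := cc_ge0 R s k.+1; have hck2 := cc_ge0 R s k.+2.
  have LC := cc_logconc R s k.
  have htk' : (t%:R - k.+1%:R : R) >= 0 by rewrite subr_ge0 ler_nat ltnW.
  have e : (k.+1%:R : R) = k%:R + 1 by rewrite -natr1.
  rewrite e in htk' *.
  case: (ltrP 0 (cc R s k)) => hc.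
    have h1 : (t%:R - k%:R) * cc R s k.+1 ^+ 2 <= cc R s k * cc R s k.+1.
      by rewrite expr2 mulrA ler_wpM2r.
    have h2 : (t%:R - k%:R) * (cc R s k * cc R s k.+2) <= cc R s k * cc R s k.+1.
      apply: le_trans h1; apply: ler_wpM2l => //; lra.
    have h3 : (t%:R - k%:R) * cc R s k.+2 <= cc R s k.+1.
      by rewrite -(ler_pM2l hc) mulrCA.
    apply: le_trans h3; apply: ler_wpM2r => //; lra.
  have hk0 : cc R s k = 0 by apply/le_anti; rewrite hc cc_ge0.
  have hk2s : (2 * s < k)%N.
    by rewrite ltnNge; apply/negP => /cpos; rewrite hk0 ltxx.
  by rewrite (@cc_zero R s k.+2) ?mulr0 //; lia.
have Inc : forall j, (j < n)%N -> cc R s (n - j.+1)%N <= (t%:R - (n - j.+1)%N%:R) * cc R s (n - j).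
  elim=> [|j IH] hj.
    rewrite subn0 subn1.
    have -> : (n.-1%:R : R) = n%:R - 1 by rewrite -subn1 natrB.
    by have -> : t%:R - (n%:R - 1) = t%:R - n%:R + 1 :> R by ring.
  set k := (n - j.+2)%N.
  have ek1 : (n - j.+1 = k.+1)%N by rewrite /k; lia.
  have ek2 : (n - j = k.+2)%N by rewrite /k; lia.
  rewrite ek1; rewrite ek1 ek2 in IH.
  have {}IH := IH (ltnW hj).
  have hck := cc_ge0 R s k; have hck2 := cc_ge0 R s k.+2.
  have hc1 : 0 < cc R s k.+1 by apply: cpos; rewrite /k; lia.
  have LC := cc_logconc R s k.
  have htk : (k.+1%:R : R) <= t%:R by rewrite ler_nat /k; lia.
  have e : (k.+1%:R : R) = k%:R + 1 by rewrite -natr1.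
  rewrite e in htk IH *.
  have h1 : cc R s k * cc R s k.+1 <= (t%:R - (k%:R + 1)) * cc R s k.+1 ^+ 2.
    rewrite expr2 mulrA; apply: (le_trans (y := cc R s k * ((t%:R - (k%:R + 1)) * cc R s k.+2))).
      by apply: ler_wpM2l.
    rewrite mulrCA -mulrA -expr2; apply: ler_wpM2l => //; lra.
  have h2 : cc R s k <= (t%:R - (k%:R + 1)) * cc R s k.+1.
    by rewrite -(ler_pM2r hc1) -mulrA -expr2.
  apply: le_trans h2 _; apply: ler_wpM2r; lra.
move=> m.
case: (leqP n m) => hm.
  rewrite -(subnKC hm); elim: (m - n)%N => [|j IH]; first by rewrite addn0.
  apply: le_trans IH; rewrite addnS ffactnSr natrM -mulrA.
  case: (leqP (n + j) t) => hj.
    rewrite natrB //; apply: ler_wpM2l; first by rewrite ler0n.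
    exact: Dec.
  rewrite (_ : (t - (n + j))%N = 0%N); last by lia.
  rewrite mul0r mulr0; by rewrite mulr_ge0 ?ler0n ?cc_ge0.
have : (m = n - (n - m))%N by lia.
move=> ->; have : (n - m <= n)%N by lia.
elim: (n - m)%N => [|j IH] hj; first by rewrite subn0.
apply: le_trans (IH (ltnW hj)).
have ej : (n - j = (n - j.+1).+1)%N by lia.
rewrite ej ffactnSr natrM -mulrA; apply: ler_wpM2l; first by rewrite ler0n.
rewrite natrB; last by lia.
rewrite -ej; exact: Inc.
Qed.

Lemma natfacts (s t d : nat) : (5 <= d)%N ->
  ((d + 1) * (d + 2) + 2 * t * (d + 1) < 4 * (s * s + s))%N ->
  (4 * (s * s + s) < (d + 2) * (d + 3 + 2 * t))%N ->
  (8 * s + 9 < (2 * t + 1) * (2 * t + 1))%N ->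
  [/\ (d < 2 * s)%N, (2 * s - d <= t)%N & (d + 2 < (2 * s - d) * (2 * s - d))%N].
Proof.
move=> h5 Na Nb Nc.
have E : (4 * (s * s + s) = (2 * s) * (2 * s) + 2 * (2 * s))%N by ring.
have E2 : (8 * s = 4 * (2 * s))%N by ring.
rewrite E in Na Nb; rewrite E2 in Nc.
move: Na Nb Nc; move: (2 * s)%N => m Na Nb Nc.
have hdm : (d < m)%N.
  rewrite ltnNge; apply/negP => hmd.
  have : (m * m <= d * d)%N by apply: leq_mul.
  lia.
suff : (m - d <= t)%N /\ (d + 2 < (m - d) * (m - d))%N by case.
move: Na Nb Nc; rewrite -(subnKC (ltnW hdm)); rewrite addKn.
move: (m - d)%N => n Na Nb Nc.
have hnt : (n <= t)%N.
  rewrite leqNgt; apply/negP => htn.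
  have f1 : ((t + 1) * (t + 1) <= n * n)%N by apply: leq_mul; lia.
  have f2 : ((t + 1) * d <= n * d)%N by apply: leq_mul; lia.
  lia.
split; first exact: hnt.
have f3 : (n * (d + 1) <= t * (d + 1))%N by apply: leq_mul.
lia.
Qed.


Lemma prep (R : realFieldType) (sr tr dr S v : R) :
  5 <= dr -> 1 <= sr -> 0 <= tr -> 0 <= S ->
  S ^+ 2 = 4 * sr ^+ 2 + 4 * sr + (tr + 1 / 2) ^+ 2 ->
  S - tr - 3 / 2 < dr + 1 ->
  v = 2 / (dr + 1) * (sr ^+ 2 + sr) - (dr + 2) / 2 - tr -> 0 < v ->
  [/\ (dr + 1) * (dr + 2) + 2 * tr * (dr + 1) < 4 * (sr * sr + sr),
      dr + tr + 3 / 2 < S & 4 * (sr * sr + sr) < (dr + 2) * (dr + 3 + 2 * tr)].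
Proof.
move=> hdr0 hsr0 htr0 HS0 HS2 Fb ev0 Hv0.
have hD : dr + 1 != 0 by rewrite lt0r_neq0 //; lra.
have ev : 2 * (dr + 1) * v = 4 * (sr * sr + sr) - (dr + 1) * (dr + 2) - 2 * tr * (dr + 1).
  rewrite ev0; field; exact: hD.
have Ra : (dr + 1) * (dr + 2) + 2 * tr * (dr + 1) < 4 * (sr * sr + sr).
  have : 0 < 2 * (dr + 1) * v by rewrite mulr_gt0 // mulr_gt0 //; lra.
  rewrite ev; lra.
rewrite expr2 in HS2.
split => //.
  rewrite ltNge; apply/negP => hle.
  have h1 : S * S <= (dr + tr + 3 / 2) * (dr + tr + 3 / 2).
    by rewrite -!expr2 ler_sqr // ?nnegrE //; lra.
  rewrite HS2 in h1; clear -h1 Ra; nra.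
have h1 : S * S < (dr + tr + 5 / 2) * (dr + tr + 5 / 2).
  by rewrite -!expr2 ltr_sqr // ?nnegrE //; lra.
rewrite HS2 in h1; clear -h1; nra.
Qed.

Lemma prep_c (R : rcfType) (sr tr : R) : 0 <= sr -> 0 <= tr ->
  (Num.sqrt (8 * sr + 9) - 1) / 2 < tr -> 8 * sr + 9 < (2 * tr + 1) * (2 * tr + 1).
Proof.
move=> hs ht Ht.
have h1 : Num.sqrt (8 * sr + 9) < 2 * tr + 1 by lra.
rewrite -expr2 -(@ltr_sqrt R (8 * sr + 9) ((2 * tr + 1) ^+ 2)); last by rewrite exprn_gt0 //; lra.
by rewrite sqrtr_sqr ger0_norm //; lra.
Qed.

Unset Implicit Arguments.


Theorem theorem3p2 (R : realType) (s1 s2 : nat) :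
  conjecture3p1 R ->
  (1 <= s1)%N ->
  (Num.sqrt (8 * s1%:R + 9 : R) - 1) / 2 < s2%:R ->
  let d0 : int :=
    Num.floor (Num.sqrt (4 * s1%:R ^+ 2 + 4 * s1%:R + (s2%:R + 1 / 2) ^+ 2 : R)
               - s2%:R - 3 / 2) in
  5 <= d0 ->
  0 < 2 / (d0%:~R + 1) * (s1%:R ^+ 2 + s1%:R) - (d0%:~R + 2) / 2 - s2%:R :> R ->
  2 / (d0%:~R + 1) * (s1%:R ^+ 2 + s1%:R) - (d0%:~R + 2) / 2 - s2%:R
    <= (995 / 1000) * (d0%:~R - 2) / (2 * s1%:R + d0%:~R - 2) :> R ->
  let N0 : int :=
    Num.floor (2 * s1%:R + s2%:R + 3 / 2
               - Num.sqrt (4 * s1%:R ^+ 2 + 4 * s1%:R + (s2%:R + 1 / 2) ^+ 2 : R)) + 1 in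
  forall N : int, (fs s1 s2 N <= fs s1 s2 N0)%N.
Proof.
move=> Hconj hs1 Ht d0 Hd0 Hv0 Hv1 N0.
rewrite /N0 /d0 in Hd0 Hv0 Hv1 *; clear N0 d0.
set S := Num.sqrt (4 * s1%:R ^+ 2 + 4 * s1%:R + (s2%:R + 1 / 2) ^+ 2 : R) in Hd0 Hv0 Hv1 *.
have HS0 : 0 <= S by apply: sqrtr_ge0.
have HS2 : S ^+ 2 = 4 * s1%:R ^+ 2 + 4 * s1%:R + (s2%:R + 1 / 2) ^+ 2.
  by rewrite sqr_sqrtr // addr_ge0 // ?sqr_ge0 // addr_ge0 // mulr_ge0 // ?exprn_ge0.
have Fl := floor_itv (S - s2%:R - 3 / 2).
set d0 := Num.floor (S - s2%:R - 3 / 2) in Hd0 Hv0 Hv1 Fl.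
clearbody d0.
have [d hd] : exists d : nat, d0 = Posz d.
  by move: Hd0; case: (d0) => [k|k] // _; exists k.
have hd5 : (5 <= d)%N by move: Hd0; rewrite hd.
have hdr : (d0%:~R : R) = d%:R by rewrite hd.
rewrite hdr in Hv0 Hv1.
move/andP: Fl; rewrite hdr intrD hdr => -[Fa Fb].
have e1 : (1%:~R : R) = 1 by [].
rewrite e1 in Fb.
clear hd hdr Hd0 d0 e1.
set sr := (s1%:R : R) in Ht HS2 Hv0 Hv1 Fa Fb *.
set tr := (s2%:R : R) in Ht HS2 Hv0 Hv1 Fa Fb *.
set dr := (d%:R : R) in Hv0 Hv1 Fa Fb *.
have hdr0 : 5 <= dr by rewrite /dr (ler_nat R 5 d).
have hsr0 : 1 <= sr by rewrite /sr (ler_nat R 1 s1).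
have htr0 : 0 <= tr by rewrite /tr ler0n.
set v := 2 / (dr + 1) * (sr ^+ 2 + sr) - (dr + 2) / 2 - tr in Hv0 Hv1.
have [Ra HSgt Rb] := prep hdr0 hsr0 htr0 HS0 HS2 Fb (erefl v) Hv0.
have Rc := prep_c (ltW (lt_le_trans ltr01 hsr0)) htr0 Ht.
have Na : ((d + 1) * (d + 2) + 2 * s2 * (d + 1) < 4 * (s1 * s1 + s1))%N.
  rewrite -(ltr_nat R) !(natrD, natrM) -/sr -/tr -/dr; clear -Ra; lra.
have Nb : (4 * (s1 * s1 + s1) < (d + 2) * (d + 3 + 2 * s2))%N.
  rewrite -(ltr_nat R) !(natrD, natrM) -/sr -/tr -/dr; clear -Rb; lra.
have Nc : (8 * s1 + 9 < (2 * s2 + 1) * (2 * s2 + 1))%N.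
  rewrite -(ltr_nat R) !(natrD, natrM) -/sr -/tr; clear -Rc; lra.
have [hds hnt hn2] := natfacts hd5 Na Nb Nc.
set n := (2 * s1 - d)%N in hnt hn2 *.
have hnR : (n%:R : R) = 2 * sr - dr by rewrite /n natrB ?natrM // ltnW.
have hn1 : (1 <= n)%N by move: hn2; case: (n).
have hns : (n <= 2 * s1)%N by rewrite /n leq_subr.
set nr := (n%:R : R) in hnR *.
have hn2R : dr + 2 < nr ^+ 2.
  by rewrite /dr /nr expr2 -natrM -(natrD _ d 2) ltr_nat.
have hnr1 : 1 <= nr by rewrite /nr (ler_nat R 1 n).
have pre : (dr + Num.sqrt (dr + 2)) / 2 <= sr.
  have : Num.sqrt (dr + 2) <= nr.
    rewrite -[X in _ <= X](@ger0_norm _ nr); last by clear -hnr1; lra.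
    by rewrite -sqrtr_sqr ler_sqrt; [clear -hn2R; lra | exact: sqr_ge0].
  by clear -hnR; lra.
have Hc := Hconj d sr hd5 pre.
rewrite -/dr in Hc.
have Hvc : v <= - (Rd d sr / Pd d sr) := le_trans Hv1 Hc.
have P0 : Pd d sr = (s1`!)%:R ^+ 2 * cc R s1 n := @Pd_eq R s1 d (ltnW hds).
have P1 : Pd d.+1 sr = (s1`!)%:R ^+ 2 * cc R s1 n.-1.
  by rewrite (@Pd_eq R s1 d.+1 hds) /n subnS.
have hK : 0 < (s1`!)%:R ^+ 2 :> R by rewrite exprn_gt0 // ltr0n fact_gt0.
set K := (s1`!)%:R ^+ 2 : R in P0 P1 hK.
have hcn : 0 < cc R s1 n := @cc_gt0 R s1 n hns.
set cn := cc R s1 n in P0 hcn *.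
set cm := cc R s1 n.-1 in P1 *.
set cp := cc R s1 n.+1.
have hD : dr + 1 != 0 by rewrite lt0r_neq0 //; clear -hdr0; lra.
have e2 : - (Rd d sr / Pd d sr) = (2 / (dr + 1) * sr ^+ 2 - 2 * dr / (dr + 1) * sr + dr / 2) - cm / cn.
  rewrite /Rd P0 P1 -natr1 -/dr; field.
  by rewrite hD lt0r_neq0 // lt0r_neq0.
have e3 : (2 / (dr + 1) * sr ^+ 2 - 2 * dr / (dr + 1) * sr + dr / 2) - v = tr - nr + 1.
  rewrite /v hnR; field; exact: hD.
have Hlo : cm <= (tr - nr + 1) * cn.
  have h : cm / cn <= tr - nr + 1.
    rewrite -e3; move: Hvc; rewrite e2; clear; lra.
  by rewrite -(divfK (lt0r_neq0 hcn) cm) ler_wpM2r // ltW.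
have hv1 : v <= 1.
  have hden : 0 < 2 * sr + dr - 2 by clear -hsr0 hdr0; lra.
  apply: (le_trans Hv1); rewrite ler_pdivrMr // mul1r; clear -hsr0 hdr0; lra.
have et : tr = ((nr + dr) ^+ 2 + 2 * (nr + dr)) / (2 * (dr + 1)) - (dr + 2) / 2 - v.
  rewrite /v hnR; field; exact: hD.
have hd0 : 0 <= dr by clear -hdr0; lra.
have hE := E4_ineq hnr1 hd0 (ltW Hv0) hv1 et.
have tn0 : 0 <= tr - nr by rewrite subr_ge0 /tr /nr ler_nat.
have hpr : (n.-1%:R : R) = nr - 1 by rewrite -subn1 natrB.
have esr : sr = (nr + dr) / 2 by rewrite hnR; field.
have rec := cc_rec R s1 n.-1.
rewrite (prednK hn1) hpr -/cn -/cm -/cp -/sr esr in rec.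
set A' := (nr + dr) * (2 * nr + 1) - nr * (3 * nr + 1) in hE.
have rec' : (nr + 1) ^+ 3 * cp = A' * cn + 2 * (dr + 1) * cm.
  rewrite (_ : nr + 1 = nr - 1 + 2); last by ring.
  by rewrite rec /A'; field.
have st1 : (tr - nr) * (2 * (dr + 1) * cm) <= (tr - nr) * (2 * (dr + 1) * ((tr - nr + 1) * cn)).
  apply: ler_wpM2l => //; apply: ler_wpM2l => //.
  by rewrite mulr_ge0 //; clear -hdr0; lra.
have st2 : ((tr - nr) * (A' + 2 * (dr + 1) * (tr - nr + 1))) * cn <= (nr + 1) ^+ 3 * cn.
  by apply: ler_wpM2r => //; exact: ltW.
have st3 : (nr + 1) ^+ 3 * ((tr - nr) * cp) = (tr - nr) * (A' * cn) + (tr - nr) * (2 * (dr + 1) * cm).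
  by rewrite mulrCA rec' mulrDr.
have hpos : 0 < (nr + 1) ^+ 3 by rewrite exprn_gt0 //; clear -hnr1; lra.
have Hhi : (tr - nr) * cp <= cn.
  rewrite -(ler_pM2l hpos) st3.
  have st4 : (tr - nr) * (A' * cn) + (tr - nr) * (2 * (dr + 1) * ((tr - nr + 1) * cn))
      = ((tr - nr) * (A' + 2 * (dr + 1) * (tr - nr + 1))) * cn by ring.
  rewrite mulrC; apply: le_trans st2; rewrite -st4.
  by rewrite [X in X + _ <= _]mulrC lerD2l.
have hfl : Num.floor (2 * sr + tr + 3 / 2 - S) = (n%:Z - 1)%R.
  apply: floor_def; rewrite subrK intrB.
  rewrite -[(n%:Z)%:~R]/nr.
  apply/andP; split; clear -Fb HSgt hnR; lra.
rewrite hfl subrK.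
case=> [m|m]; last by [].
rewrite -(ler_nat R) !fs_eq.
exact: (unimodal hn1 hnt hns Hlo Hhi).
Qed.
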